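(* Let $\kappa=1$ and, for $\sigma\in[0,1]$ and $h>0$, define $$f(\sigma,h^{-1})=-\tfrac14\pi+\Im\log\Gamma\big(\tfrac34-\tfrac12\sigma+\tfrac12 i\kappa h^{-1}\big)-\Im\log\Gamma\big(\tfrac14-\tfrac12\sigma+\tfrac12 i\kappa h^{-1}\big).$$ Then for all $0<h^{-1}<\infty$ we have $-\frac\pi2<f(0,h^{-1})<0$ and $0<f(1,h^{-1})<\pi$, and $\partial_\sigma f(\sigma,h^{-1})>0$ for all $0<\sigma<1$ and $0<h^{-1}<\infty$. Hence for each $0<h^{-1}<\infty$ there exists a unique $\sigma(h)\in(0,1)$ such that $f(\sigma(h),h^{-1})=0$, and there are no solutions $\sigma\in(0,1)$ of $f(\sigma,h^{-1})=2\pi n$ for integers $n\neq0$.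
   Context: $\log\Gamma$ denotes the branch of the logarithm of the Gamma function which is analytic on $\mathbb{C}\setminus(-\infty,0]$ and satisfies $\log\Gamma(1)=0$. (This $f$ equals $\Im\log A(\lambda)$ for $A(\lambda)=e^{-i\pi/4}\sqrt2\,\Gamma(\frac34-\frac12 i\lambda)/\Gamma(\frac14-\frac12 i\lambda)$, $\lambda=-\kappa h^{-1}-i\sigma$, with this choice of branch.) *)

(* Defs.v *)
From Stdlib Require Import Reals.
From Coquelicot Require Import Coquelicot.
Open Scope R_scope.

(* Principal argument Arg w in (-PI, PI] (the usual atan2), Arg 0 := 0. *)
Definition Arg (w : C) : R :=
  let x := fst w in let y := snd w in
  if Rlt_dec 0 x then atan (y / x)
  else if Rlt_dec x 0 then
    (if Rle_dec 0 y then atan (y / x) + PI else atan (y / x) - PI)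
  else if Rlt_dec 0 y then PI / 2
  else if Rlt_dec y 0 then - (PI / 2)
  else 0.

Definition Clog (w : C) : C := (ln (Cmod w), Arg w).

(* k-th term (k >= 1) of Euler's product  Gamma z = (1/z) prod_{k>=1} (1+1/k)^z / (1+z/k),
   taken with the principal logarithm:  z log(1+1/k) - Log(1 + z/k). *)
Definition lnGamma_term (z : C) (n : nat) : C :=
  let k := INR (S n) in
  Cminus (Cmult z (RtoC (ln (1 + / k)))) (Clog (Cplus 1 (Cmult z (RtoC (/ k))))).

(* log Gamma z := - Log z + sum_{k>=1} [ z log(1+1/k) - Log(1+z/k) ].
   This is the branch of log Gamma analytic on C \ (-oo,0] with log Gamma 1 = 0. *)
Definition lnGamma (z : C) : C :=
  Cplus (Copp (Clog z))
    (Series (fun n => fst (lnGamma_term z n)), Series (fun n => snd (lnGamma_term z n))).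

Definition kappa : R := 1.

(* f(sigma, t) with t = h^{-1} *)
Definition fsig (sigma t : R) : R :=
  - (PI / 4)
  + snd (lnGamma (3/4 - sigma/2, kappa * t / 2))
  - snd (lnGamma (1/4 - sigma/2, kappa * t / 2)).

(* Main.v *)
Require Import Defs.
From Stdlib Require Import Reals ZArith Lra Lia.
From Coquelicot Require Import Coquelicot.
From Stdlib Require Import FunctionalExtensionality.
Open Scope R_scope.


Lemma Arg_pos_re x y : 0 < x -> Arg (x,y) = atan (y/x).
Proof. intros H. unfold Arg; simpl. destruct (Rlt_dec 0 x); [reflexivity|lra]. Qed.

Lemma Arg_upper c y : 0 < y -> Arg (c,y) = PI/2 - atan (c/y).
Proof.
  intros Hy. unfold Arg; simpl.
  destruct (Rlt_dec 0 c) as [Hc|Hc].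
  - replace (y/c) with (/ (c/y)) by (field; lra).
    apply atan_inv. apply Rdiv_lt_0_compat; lra.
  - destruct (Rlt_dec c 0) as [Hc'|Hc'].
    + destruct (Rle_dec 0 y); [|lra].
      replace (y/c) with (- / (-c/y)) by (field; lra).
      rewrite atan_opp, atan_inv by (apply Rdiv_lt_0_compat; lra).
      replace (-c/y) with (-(c/y)) by (field; lra). rewrite atan_opp. lra.
    + assert (c = 0) by lra. subst. destruct (Rlt_dec 0 y); [|lra].
      unfold Rdiv. rewrite Rmult_0_l, atan_0. lra.
Qed.

Lemma snd_term c y n : 0 < y -> -1 < c ->
  snd (lnGamma_term (c,y) n) = y * ln (1 + / INR (S n)) - atan (y / (INR (S n) + c)).
Proof.
  intros Hy Hc. unfold lnGamma_term, Clog.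
  remember (INR (S n)) as k.
  assert (Hk : 1 <= k) by (subst; apply (le_INR 1); lia).
  replace (Cplus 1 (Cmult (c,y) (RtoC (/k)))) with ((1 + c/k), (y/k)).
  2:{ apply injective_projections; simpl; field; lra. }
  rewrite Arg_pos_re.
  2:{ replace (1 + c/k) with ((k+c)/k) by (field; lra). apply Rdiv_lt_0_compat; lra. }
  replace (y / k / (1 + c/k)) with (y/(k+c)) by (field; lra).
  simpl. ring.
Qed.

Lemma snd_lnGamma c y : 0 < y -> -1 < c ->
  snd (lnGamma (c,y)) = - (PI/2 - atan (c/y)) +
     Series (fun n => y * ln (1 + / INR (S n)) - atan (y / (INR (S n) + c))).
Proof.
  intros Hy Hc. unfold lnGamma. rewrite <- Arg_upper by lra.
  change (snd (Cplus (Copp (Clog (c, y)))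
    (Series (fun n : nat => fst (lnGamma_term (c, y) n)),
     Series (fun n : nat => snd (lnGamma_term (c, y) n))))) with
   (- Arg (c,y) + Series (fun n : nat => snd (lnGamma_term (c, y) n))).
  f_equal. apply Series_ext. intros n. apply snd_term; lra.
Qed.

Lemma is_series_telescope (a : nat -> R) (l : R) :
  is_lim_seq a l -> is_series (fun n => a n - a (S n)) (a 0%nat - l).
Proof.
  intros H.
  assert (E : forall n, sum_n (fun k => a k - a (S k)) n = a 0%nat - a (S n)).
  { induction n. - rewrite sum_O. reflexivity.
    - rewrite sum_Sn, IHn. unfold plus; simpl. ring. }
  unfold is_series.
  change (is_lim_seq (sum_n (fun k => a k - a (S k))) (a 0%nat - l)).
  apply is_lim_seq_ext with (fun n => a 0%nat - a (S n)).
  { intros n; rewrite E; reflexivity. }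
  apply (is_lim_seq_minus' _ _ (a 0%nat) l).
  apply is_lim_seq_const. apply (is_lim_seq_incr_1 a l). exact H.
Qed.

Lemma lim_inv_S : is_lim_seq (fun n => / INR (S n)) 0.
Proof.
  replace (Finite 0) with (Rbar_inv p_infty) by reflexivity.
  apply is_lim_seq_inv. 2: discriminate.
  apply (is_lim_seq_incr_1 INR p_infty). apply is_lim_seq_INR.
Qed.

Lemma ex_series_inv_sq : ex_series (fun n => / (INR (S n) * INR (S n))).
Proof.
  apply (@ex_series_le R_AbsRing R_CompleteNormedModule _ (fun n => 2 * (/ INR (S n) - / INR (S (S n))))).
  - intros n. rewrite S_INR with (n := S n).
    assert (H1 : 1 <= INR (S n)) by (apply (le_INR 1); lia).
    set (k := INR (S n)) in *. unfold norm; simpl. unfold abs; simpl.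
    rewrite Rabs_pos_eq.
    2:{ apply Rlt_le, Rinv_0_lt_compat. nra. }
    apply Rmult_le_reg_r with (k * k * (k+1)). nra.
    field_simplify; try lra; nra.
  - apply (ex_series_ext (fun n => 2 * / INR (S n) - 2 * / INR (S (S n)))).
    { intros n; symmetry; apply Rmult_minus_distr_l. }
    eexists. apply (is_series_telescope (fun n => 2 * / INR (S n)) (2 * 0)).
    apply (is_lim_seq_scal_l _ 2 0). apply lim_inv_S.
Qed.

Lemma ln_bounds x : 0 <= x -> x - x^2 <= ln (1+x) <= x.
Proof.
  intros Hx. split.
  - assert (Hz : 0 < / (1+x)) by (apply Rinv_0_lt_compat; lra).
    pose proof (exp_ineq1_le (ln (/ (1+x)))) as H.
    rewrite exp_ln in H by exact Hz. rewrite ln_Rinv in H by lra.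
    assert (/ (1+x) = 1 - x/(1+x)) by (field; lra).
    assert (x - x^2 <= x/(1+x)).
    { apply Rmult_le_reg_r with (1+x). lra. field_simplify; try lra. nra. }
    lra.
  - rewrite <- (ln_exp x) at 2. apply ln_le. lra. apply exp_ineq1_le.
Qed.

Lemma atan_bounds x : 0 <= x -> x - x^3 <= atan x <= x.
Proof.
  intros Hx. destruct (Req_dec x 0) as [->|Hx0].
  { rewrite atan_0. lra. }
  destruct (MVT_cor2 atan (fun u => / (1 + u^2)) 0 x) as [c [Hc1 Hc2]]. lra.
  { intros; apply derivable_pt_lim_atan. }
  rewrite atan_0 in Hc1.
  assert (0 < c^2) by (apply pow_lt; lra).
  assert (c^2 < x^2) by nra.
  assert (Hi : / (1 + c^2) = 1 - c^2/(1+c^2)) by (field; lra).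
  rewrite Hi in Hc1.
  assert (0 <= c^2/(1+c^2) <= c^2).
  { split. apply Rlt_le, Rdiv_lt_0_compat; lra.
    apply Rmult_le_reg_r with (1+c^2). lra. field_simplify; nra. }
  split; nra.
Qed.

Lemma T_bound c y n : 0 < y -> -1/2 <= c ->
  Rabs (y * ln (1 + / INR (S n)) - atan (y / (INR (S n) + c)))
  <= (y + 2 * y * Rabs c + 8 * y^3) * / (INR (S n) * INR (S n)).
Proof.
  intros Hy Hc.
  assert (Hk : 1 <= INR (S n)) by (apply (le_INR 1); lia).
  set (k := INR (S n)) in *.
  assert (Hkc : k/2 <= k + c) by lra.
  assert (Hx : 0 <= / k) by (apply Rlt_le, Rinv_0_lt_compat; lra).
  destruct (ln_bounds (/k) Hx) as [L1 L2].
  assert (Hu : 0 <= y/(k+c)) by (apply Rlt_le, Rdiv_lt_0_compat; lra).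
  destruct (atan_bounds _ Hu) as [A1 A2].
  set (u := y/(k+c)) in *.
  assert (Hu3 : u^3 <= 8 * y^3 * /(k*k)).
  { unfold u. assert (0 < k + c) by lra.
    assert (y / (k+c) <= 2*y/k).
    { apply Rmult_le_reg_r with ((k+c)*k). nra. field_simplify; nra. }
    assert (/k <= 1) by (rewrite <- Rinv_1; apply Rinv_le_contravar; lra).
    assert (2*y/k <= 2*y) by (unfold Rdiv; nra).
    assert (0 <= y/(k+c)) by exact Hu.
    apply Rle_trans with ((2*y/k)^3).
    { apply pow_incr; lra. }
    apply Rmult_le_reg_r with (k*k*k). nra.
    field_simplify; try lra. 
    assert (0 < y^3) by (apply pow_lt; lra). nra. }
  assert (Hd : Rabs (y/k - u) <= 2 * y * Rabs c * /(k*k)).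
  { unfold u. replace (y/k - y/(k+c)) with (y * c / (k*(k+c))) by (field; lra).
    rewrite Rabs_div by nra. rewrite Rabs_mult.
    rewrite (Rabs_pos_eq y) by lra. rewrite (Rabs_pos_eq (k*(k+c))) by nra.
    assert (Hp: 0 < k*(k+c)) by (apply Rmult_lt_0_compat; lra).
    apply Rmult_le_reg_r with (k*k*(k*(k+c))). apply Rmult_lt_0_compat; nra.
    assert (0 <= Rabs c) by apply Rabs_pos.
    assert (0 <= y * Rabs c) by nra.
    replace (y * Rabs c / (k * (k + c)) * (k * k * (k * (k + c)))) with (y*Rabs c*(k*k)) by (field; lra).
    replace (2 * y * Rabs c * / (k * k) * (k * k * (k * (k + c)))) with (y*Rabs c*(2*k*(k+c))) by (field; lra).
    apply Rmult_le_compat_l; nra. }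
  assert (Hl : y * (/k)^2 = y * /(k*k)) by (field; lra).
  apply Rabs_le. apply Rabs_le_between in Hd.
  assert (0 <= y * (/k - ln (1 + /k)) <= y * (/k)^2) by (split; nra).
  split; nra.
Qed.

Lemma ex_series_T c y : 0 < y -> -1/2 <= c ->
  ex_series (fun n => y * ln (1 + / INR (S n)) - atan (y / (INR (S n) + c))).
Proof.
  intros Hy Hc.
  apply (@ex_series_le R_AbsRing R_CompleteNormedModule _
     (fun n => (y + 2 * y * Rabs c + 8 * y^3) * / (INR (S n) * INR (S n)))).
  - intros n. apply T_bound; lra.
  - exact (@ex_series_scal_l R_AbsRing R_NormedModule _ _ ex_series_inv_sq).
Qed.

Definition W (y s : R) (n : nat) : R :=
  atan ((INR (S n) + (3/4 - s/2)) / y) - atan ((INR (S n) + (1/4 - s/2)) / y).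

Lemma atan_recip_pos a y : 0 < a -> 0 < y -> atan (y / a) = PI/2 - atan (a / y).
Proof.
  intros Ha Hy. replace (y/a) with (/ (a/y)) by (field; lra).
  apply atan_inv. apply Rdiv_lt_0_compat; lra.
Qed.

Lemma fsig_repr s t : 0 < t -> s <= 3/2 ->
  fsig s t = - (PI/4) + (atan ((3/4 - s/2)/(t/2)) - atan ((1/4 - s/2)/(t/2)))
             + Series (W (t/2) s).
Proof.
  intros Ht Hs. unfold fsig, kappa.
  replace (1 * t / 2) with (t/2) by field.
  rewrite !snd_lnGamma by lra.
  assert (E : forall c1 c2 : R, -1/2 <= c1 -> -1/2 <= c2 ->
    Series (fun n => t/2 * ln (1 + / INR (S n)) - atan (t/2 / (INR (S n) + c2))) -
    Series (fun n => t/2 * ln (1 + / INR (S n)) - atan (t/2 / (INR (S n) + c1))) =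
    Series (fun n => atan ((INR (S n) + c2) / (t/2)) - atan ((INR (S n) + c1) / (t/2)))).
  { intros c1 c2 H1 H2. rewrite <- Series_minus by (apply ex_series_T; lra).
    apply Series_ext. intros n.
    assert (Hk : 1 <= INR (S n)) by (apply (le_INR 1); lia).
    rewrite (atan_recip_pos (INR (S n) + c2)) by lra.
    rewrite (atan_recip_pos (INR (S n) + c1)) by lra. ring. }
  pose proof (E (1/4 - s/2) (3/4 - s/2) ltac:(lra) ltac:(lra)) as E'.
  unfold W. rewrite <- E'. ring.
Qed.

Lemma atan_nonneg x : 0 <= x -> 0 <= atan x.
Proof. intros H. destruct (Req_dec x 0) as [->|H']. rewrite atan_0; lra.
  pose proof (atan_increasing 0 x ltac:(lra)). rewrite atan_0 in H0. lra. Qed.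
Lemma atan_nonpos x : x <= 0 -> atan x <= 0.
Proof. intros H. destruct (Req_dec x 0) as [->|H']. rewrite atan_0; lra.
  pose proof (atan_increasing x 0 ltac:(lra)). rewrite atan_0 in H0. lra. Qed.

Lemma atan_add x y : x * y < 1 -> atan x + atan y = atan ((x + y) / (1 - x * y)).
Proof.
  intros Hxy.
  set (al := atan x). set (be := atan y).
  assert (Ha := atan_bound x). assert (Hb := atan_bound y).
  fold al in Ha. fold be in Hb.
  assert (Hr : - (PI/2) < al + be < PI/2).
  { split.
    - destruct (Rle_dec 0 y) as [Hy|Hy]; [pose proof (atan_nonneg y Hy); unfold be; lra|].
      assert (Hx : / y < x).
      { apply Rmult_lt_reg_r with (-y). lra.
        replace (/ y * - y) with (-1) by (field; lra).
        replace (x * - y) with (- (x*y)) by ring. lra. }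
      apply atan_increasing in Hx.
      replace (/ y) with (- / (- y)) in Hx by (field; lra).
      rewrite atan_opp, atan_inv in Hx by lra.
      rewrite atan_opp in Hx. unfold al, be. lra.
    - destruct (Rle_dec y 0) as [Hy|Hy]; [pose proof (atan_nonpos y Hy); unfold be; lra|].
      assert (Hx : x < / y).
      { apply Rmult_lt_reg_r with y. lra.
        replace (/ y * y) with 1 by (field; lra). lra. }
      apply atan_increasing in Hx.
      rewrite atan_inv in Hx by lra. unfold al, be. lra. }
  assert (Hca : cos al <> 0) by (apply Rgt_not_eq, cos_gt_0; lra).
  assert (Hcb : cos be <> 0) by (apply Rgt_not_eq, cos_gt_0; lra).
  assert (Hcab : cos (al + be) <> 0) by (apply Rgt_not_eq, cos_gt_0; lra).
  assert (Ht : tan (al + be) = (x + y) / (1 - x * y)).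
  { rewrite tan_plus; auto. unfold al, be. rewrite !tan_atan. reflexivity.
    unfold al, be. rewrite !tan_atan. lra. }
  rewrite <- Ht. rewrite atan_tan; auto.
Qed.

Definition Gf (a b : R) : R := atan (sin (2*a) / (exp (2*b) - cos (2*a))).

Lemma exp2_gt1 b : 0 < b -> 1 < exp (2*b).
Proof. intros. pose proof (exp_ineq1 (2*b)). assert (2*b <> 0) by lra. specialize (H0 H1). lra. Qed.

Lemma G_dup a b : 0 < b -> Gf (2*a) (2*b) = Gf a b + Gf (a + PI/2) b.
Proof.
  intros Hb. unfold Gf.
  replace (2 * (a + PI/2)) with (2*a + PI) by field.
  rewrite neg_sin, neg_cos.
  replace (2 * (2*b)) with (2*b + 2*b) by ring. rewrite exp_plus.
  rewrite sin_2a with (x := 2*a). rewrite cos_2a with (x := 2*a).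
  set (s := sin (2*a)). set (c := cos (2*a)). set (E := exp (2*b)).
  assert (HE : 1 < E) by (apply exp2_gt1; lra).
  assert (Hc := COS_bound (2*a)). fold c in Hc.
  rewrite atan_add.
  - f_equal. field. split; [lra|]. split; [lra|].
    assert (0 <= s*s) by nra. nra.
  - assert (0 <= s*s) by nra.
    replace (s / (E - c) * (- s / (E - - c))) with (- (s*s) / ((E-c)*(E+c))) by (field; lra).
    assert (0 < (E-c)*(E+c)) by nra.
    assert (0 <= s*s/((E-c)*(E+c))) by (apply Rdiv_le_0_compat; lra).
    unfold Rdiv in *. lra.
Qed.

Lemma G_period a b : Gf (a + PI) b = Gf a b.
Proof.
  unfold Gf. replace (2 * (a + PI)) with ((2*a + PI) + PI) by ring.
  rewrite !neg_sin, !neg_cos, !Ropp_involutive. reflexivity.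
Qed.

Lemma G_odd a b : Gf (- a) b = - Gf a b.
Proof.
  unfold Gf. replace (2 * - a) with (- (2*a)) by ring.
  rewrite sin_neg, cos_neg, <- atan_opp. f_equal. unfold Rdiv. ring.
Qed.

Fixpoint rsum (f : nat -> R) (n : nat) : R :=
  match n with O => 0 | S m => rsum f m + f m end.

Lemma rsum_ext f g n : (forall k, (k < n)%nat -> f k = g k) -> rsum f n = rsum g n.
Proof. induction n; intros H; simpl; auto. rewrite IHn by (intros; apply H; lia). rewrite H by lia. reflexivity. Qed.

Lemma rsum_plus f g n : rsum (fun k => f k + g k) n = rsum f n + rsum g n.
Proof. induction n; simpl; [ring|rewrite IHn; ring]. Qed.

Lemma rsum_minus f g n : rsum (fun k => f k - g k) n = rsum f n - rsum g n.
Proof. induction n; simpl; [ring|rewrite IHn; ring]. Qed.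

Lemma rsum_opp f n : rsum (fun k => - f k) n = - rsum f n.
Proof. induction n; simpl; [ring|rewrite IHn; ring]. Qed.

Lemma rsum_const c n : rsum (fun _ => c) n = INR n * c.
Proof. induction n; simpl rsum; [simpl; ring|rewrite IHn, S_INR; ring]. Qed.

Lemma rsum_split f n m : rsum f (n + m) = rsum f n + rsum (fun k => f (n + k)%nat) m.
Proof. induction m; simpl. rewrite Nat.add_0_r; ring. rewrite Nat.add_succ_r. simpl. rewrite IHm. ring. Qed.

Lemma rsum_rev n : forall f, rsum f n = rsum (fun k => f (n - 1 - k)%nat) n.
Proof.
  induction n; intros f. reflexivity.
  replace (S n) with (1 + n)%nat at 1 by lia. rewrite rsum_split.
  change (rsum f 1) with (0 + f 0%nat).
  change (rsum (fun k => f (S n - 1 - k)%nat) (S n)) with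
    (rsum (fun k => f (S n - 1 - k)%nat) n + f (S n - 1 - n)%nat).
  rewrite (IHn (fun k => f (1 + k)%nat)).
  replace (S n - 1 - n)%nat with 0%nat by lia.
  rewrite (rsum_ext (fun k => f (1 + (n - 1 - k))%nat) (fun k => f (S n - 1 - k)%nat)).
  ring. intros k Hk. f_equal. lia.
Qed.

Lemma rsum_abs_le f g n : (forall k, (k < n)%nat -> Rabs (f k) <= g k) -> Rabs (rsum f n) <= rsum g n.
Proof.
  induction n; intros H; simpl. rewrite Rabs_R0; lra.
  eapply Rle_trans. apply Rabs_triang. apply Rplus_le_compat. apply IHn; intros; apply H; lia. apply H; lia.
Qed.

Lemma G_iter m : forall a b, 0 < b ->
  Gf (INR (2^m) * a) (INR (2^m) * b) =
  rsum (fun k => Gf (a + INR k * PI / INR (2^m)) b) (2^m).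
Proof.
  induction m; intros a b Hb.
  - simpl. rewrite !Rmult_1_l. unfold Rdiv. rewrite Rmult_0_l, Rmult_0_l, Rplus_0_r. ring.
  - assert (HN : 0 < INR (2^m)) by (apply lt_0_INR; apply Nat.neq_0_lt_0, Nat.pow_nonzero; lia).
    replace (2 ^ S m)%nat with (2^m + 2^m)%nat by (simpl; lia).
    rewrite plus_INR.
    replace ((INR (2^m) + INR (2^m)) * a) with (INR (2^m) * (2*a)) by ring.
    replace ((INR (2^m) + INR (2^m)) * b) with (INR (2^m) * (2*b)) by ring.
    rewrite IHm by lra. rewrite rsum_split.
    rewrite <- rsum_plus. apply rsum_ext. intros k Hk.
    replace (2 * a + INR k * PI / INR (2 ^ m)) with (2 * (a + INR k * PI / (INR (2^m) + INR (2^m)))) by (field; lra).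
    rewrite G_dup by lra. f_equal. f_equal.
    rewrite plus_INR. field. lra.
Qed.



Lemma pow2_pos m : 0 < INR (2^m).
Proof. apply lt_0_INR; apply Nat.neq_0_lt_0, Nat.pow_nonzero; lia. Qed.

Lemma G_paired m y : 0 < y ->
  Gf (PI/4) (PI*y) =
  rsum (fun k => Gf (PI * (INR k + 1/4) / INR (2^S m)) (PI * y / INR (2^S m))
               - Gf (PI * (INR k + 3/4) / INR (2^S m)) (PI * y / INR (2^S m))) (2^m).
Proof.
  intros Hy.
  assert (HM := pow2_pos m).
  assert (HN : INR (2^S m) = 2 * INR (2^m)) by (rewrite Nat.pow_succ_r', mult_INR; reflexivity).
  set (N := INR (2^S m)) in *. set (M := INR (2^m)) in *.
  set (be := PI * y / N).
  assert (Hbe : 0 < be) by (unfold be; apply Rdiv_lt_0_compat; [apply Rmult_lt_0_compat; [apply PI_RGT_0|lra]|lra]).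
  replace (Gf (PI/4) (PI*y)) with (Gf (INR (2^S m) * (PI / (4 * N))) (INR (2^S m) * be)).
  2:{ fold N. unfold be. f_equal; field; lra. }
  rewrite G_iter by exact Hbe. fold N.
  replace (2 ^ S m)%nat with (2^m + 2^m)%nat by (simpl; lia).
  rewrite rsum_split, rsum_minus. unfold Rminus at 1. f_equal.
  - apply rsum_ext. intros k Hk. f_equal. field. lra.
  - rewrite rsum_rev. rewrite <- rsum_opp. apply rsum_ext. intros k Hk.
    rewrite <- G_odd. rewrite <- (G_period (- (PI * (INR k + 3/4) / N))). f_equal.
    assert (E : INR (2^m - 1 - k) = M - 1 - INR k).
    { assert (1 <= 2^m)%nat by (apply Nat.le_succ_l, Nat.neq_0_lt_0, Nat.pow_nonzero; lia).
      rewrite minus_INR by lia. rewrite minus_INR by lia. reflexivity. }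
    rewrite plus_INR, E. fold M.
    rewrite HN. field. lra.
Qed.

Lemma nonneg_deriv (f df : R -> R) B :
  (forall x, 0 <= x <= B -> is_derive f x (df x)) ->
  (forall x, 0 <= x <= B -> 0 <= df x) -> f 0 = 0 ->
  forall x, 0 <= x <= B -> 0 <= f x.
Proof.
  intros Hd Hp H0 x Hx.
  destruct (Req_dec x 0) as [->|Hx0]. lra.
  destruct (MVT_cor2 f df 0 x) as [c [Hc1 Hc2]]. lra.
  { intros c Hc. apply is_derive_Reals. apply Hd. lra. }
  assert (0 <= df c) by (apply Hp; lra). nra.
Qed.

Lemma cosh_ge1 b : 1 <= cosh b.
Proof.
  unfold cosh. rewrite exp_Ropp. assert (0 < exp b) by apply exp_pos.
  set (u := exp b) in *. apply Rmult_le_reg_r with (2*u). lra.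
  field_simplify; try lra. replace (u^2+1) with ((u-1)^2 + 2*u) by ring. assert (0 <= (u-1)^2) by apply pow2_ge_0. lra.
Qed.

Lemma sinh_ge b : 0 <= b -> b <= sinh b.
Proof.
  intros Hb. cut (0 <= sinh b - b). lra.
  apply (nonneg_deriv (fun x => sinh x - x) (fun x => cosh x - 1) b).
  - intros x _. unfold sinh, cosh. auto_derive. auto. field.
  - intros x _. pose proof (cosh_ge1 x). lra.
  - unfold sinh. rewrite Ropp_0, exp_0. field.
  - lra.
Qed.

Lemma cosh_le2 b : 0 <= b <= 1 -> cosh b <= 2.
Proof.
  intros Hb. unfold cosh.
  assert (exp b <= 3).
  { apply Rle_trans with (exp 1). destruct (Req_dec b 1) as [->|Hb1]. lra.
    left. apply exp_increasing. lra. apply exp_le_3. }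
  assert (exp (-b) <= 1).
  { rewrite <- exp_0. destruct (Req_dec b 0) as [->|Hb0]. rewrite Ropp_0. lra.
    left. apply exp_increasing. lra. }
  lra.
Qed.

Lemma sinh_le2 b : 0 <= b <= 1 -> sinh b <= 2*b.
Proof.
  intros Hb. cut (0 <= 2*b - sinh b). lra.
  apply (nonneg_deriv (fun x => 2*x - sinh x) (fun x => 2 - cosh x) 1).
  - intros x _. unfold sinh, cosh. auto_derive. auto. field.
  - intros x Hx. pose proof (cosh_le2 x Hx). lra.
  - unfold sinh. rewrite Ropp_0, exp_0. field.
  - lra.
Qed.

Lemma cosh_le b : 0 <= b <= 1 -> cosh b <= 1 + b^2.
Proof.
  intros Hb. cut (0 <= 1 + b^2 - cosh b). lra.
  apply (nonneg_deriv (fun x => 1 + x^2 - cosh x) (fun x => 2*x - sinh x) 1).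
  - intros x _. unfold sinh, cosh. auto_derive. auto. field.
  - intros x Hx. pose proof (sinh_le2 x Hx). lra.
  - unfold cosh. rewrite Ropp_0, exp_0. field.
  - lra.
Qed.

Lemma sinh_le b : 0 <= b <= 1 -> sinh b <= b + b^3.
Proof.
  intros Hb. cut (0 <= b + b^3 - sinh b). lra.
  apply (nonneg_deriv (fun x => x + x^3 - sinh x) (fun x => 1 + 3*x^2 - cosh x) 1).
  - intros x _. unfold sinh, cosh. auto_derive. auto. field.
  - intros x Hx. pose proof (cosh_le x Hx). nra.
  - unfold sinh. rewrite Ropp_0, exp_0. field.
  - lra.
Qed.

Lemma sin_le_id a : 0 <= a -> sin a <= a.
Proof.
  intros Ha. cut (0 <= a - sin a). lra.
  apply (nonneg_deriv (fun x => x - sin x) (fun x => 1 - cos x) a).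
  - intros x _. auto_derive. auto. ring.
  - intros x _. pose proof (COS_bound x). lra.
  - rewrite sin_0. ring.
  - lra.
Qed.

Lemma cos_lb a : 0 <= a -> 1 - a^2/2 <= cos a.
Proof.
  intros Ha. cut (0 <= cos a - 1 + a^2/2). lra.
  apply (nonneg_deriv (fun x => cos x - 1 + x^2/2) (fun x => x - sin x) a).
  - intros x _. auto_derive. auto. field.
  - intros x Hx. pose proof (sin_le_id x ltac:(lra)). lra.
  - rewrite cos_0. field.
  - lra.
Qed.

Lemma sin_lb3 a : 0 <= a -> a - a^3/6 <= sin a.
Proof.
  intros Ha. cut (0 <= sin a - a + a^3/6). lra.
  apply (nonneg_deriv (fun x => sin x - x + x^3/6) (fun x => cos x - 1 + x^2/2) a).
  - intros x _. auto_derive. auto. field.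
  - intros x Hx. pose proof (cos_lb x ltac:(lra)). lra.
  - rewrite sin_0. field.
  - lra.
Qed.

Lemma key_alg a b p c s : 0 < a <= 2 -> 0 < b <= 1 -> b <= p <= b + b^3 ->
  1 <= c <= 1 + b^2 -> a - a^3/6 <= s <= a ->
  Rabs (b/(a^2+b^2) - p*c/(p^2+s^2)) <= 27*b.
Proof.
  intros Ha Hb Hp Hc Hs.
  set (D1 := a^2 + b^2). assert (HD1 : 0 < D1) by (unfold D1; nra).
  assert (Hs3 : a/3 <= s) by nra.
  set (D2 := p^2 + s^2).
  assert (HD2 : D1/9 <= D2) by (unfold D1, D2; nra).
  assert (HD2p : 0 < D2) by lra.
  set (X := b*D2 - p*c*D1).
  assert (EX : X = p*b*(p - c*b) + a^2*(b - p*c) + b*(s^2 - a^2)) by (unfold X, D1, D2; ring).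
  assert (H1 : - b^3 <= p - c*b <= b^3) by (split; nra).
  assert (H2 : 0 <= p*c - b <= 3*b^3).
  { split. nra. assert (p*c <= (b+b^3)*(1+b^2)) by (apply Rmult_le_compat; nra).
    assert (E5: (b+b^3)*(1+b^2) = b + 2*b^3 + b^5) by ring.
    assert (b^2 <= 1) by nra. assert (0 <= b^3) by (apply pow_le; lra).
    assert (b^3*b^2 <= b^3*1) by (apply Rmult_le_compat_l; lra).
    assert (b^5 = b^3*b^2) by ring. lra. }
  assert (H3 : 0 <= a^2 - s^2 <= a^4/3).
  { split. nra. assert (a^2 - s^2 = (a - s)*(a+s)) by ring.
    assert ((a - s)*(a+s) <= (a^3/6)*(2*a)) by (apply Rmult_le_compat; nra). nra. }
  assert (Hp2 : p <= 2*b) by nra.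
  assert (HX : Rabs X <= 3*b*D1^2).
  { rewrite EX. apply Rabs_le.
    assert (0 <= p*b) by nra.
    assert (- (p*b*b^3) <= p*b*(p - c*b) <= p*b*b^3) by (split; nra).
    assert (p*b*b^3 <= 2*b^5) by nra.
    assert (0 <= a^2*(p*c - b) <= a^2*(3*b^3)) by (split; nra).
    assert (0 <= b*(a^2 - s^2) <= b*(a^4/3)) by (split; nra).
    assert (2*b^5 + 3*a^2*b^3 + b*a^4/3 <= 3*b*D1^2).
    { unfold D1. assert (0 <= a^2*b^3) by nra. assert (0 <= b*a^4) by nra. nra. }
    split; nra. }
  replace (b/D1 - p*c/D2) with (X/(D1*D2)) by (unfold X; field; lra).
  unfold Rdiv. rewrite Rabs_mult, Rabs_inv, (Rabs_pos_eq (D1*D2)) by nra.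
  apply Rmult_le_reg_r with (D1*D2). nra.
  rewrite Rmult_assoc, Rinv_l by nra. rewrite Rmult_1_r.
  apply Rle_trans with (3*b*D1^2). exact HX.
  assert (D1*D1 <= 9*(D1*D2)) by nra. nra.
Qed.

Lemma dE_bound a b : 0 < a <= 2 -> 0 < b <= 1 ->
  Rabs (b/(a^2+b^2) - (exp (2*b)^2 - 1)/(exp (2*b)^2 - 2*exp (2*b)*cos (2*a) + 1)) <= 27*b.
Proof.
  intros Ha Hb.
  assert (Hu : 1 < exp b) by (pose proof (exp_ineq1 b); lra).
  assert (Hp1 := sinh_ge b ltac:(lra)). assert (Hp2 := sinh_le b ltac:(lra)).
  assert (Hc1 := cosh_ge1 b). assert (Hc2 := cosh_le b ltac:(lra)).
  assert (Hs1 := sin_lb3 a ltac:(lra)). assert (Hs2 := sin_le_id a ltac:(lra)).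
  replace ((exp (2*b)^2 - 1)/(exp (2*b)^2 - 2*exp (2*b)*cos (2*a) + 1))
    with (sinh b * cosh b / (sinh b ^2 + sin a ^2)).
  - apply key_alg; lra.
  - unfold sinh, cosh. rewrite exp_Ropp. replace (2*b) with (b+b) by ring. rewrite exp_plus.
    rewrite cos_2a_sin. set (u := exp b) in *. set (s := sin a).
    assert (0 < (u^2-1)^2 + 4*u^2*s^2) by (assert (0 < (u^2-1)^2) by (apply pow_lt; nra); nra).
    assert (0 < ((u - /u)/2)^2 + s^2).
    { assert (0 < (u - /u)/2). { apply Rmult_lt_reg_r with (2*u). lra. field_simplify; nra. }
      nra. }
    field. split; [replace ((u*u)^2 - 2*(u*u)*(1-2*s*s) + 1) with ((u^2-1)^2 + 4*u^2*s^2) by ring; lra | lra].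
Qed.

Definition ef (a b : R) : R := atan (a/b) - a - Gf a b.

Lemma Kaux s c E : s*s + c*c = 1 -> 1 < E -> -1 <= c <= 1 ->
  (2 * 1 * c * / (E + - c) + s * (- - (2 * 1 * - s) * / ((E + - c) * (E + - c)))) *
  / (1 + s * / (E + - c) * (s * / (E + - c) * 1)) = (E^2-1)/(E^2 - 2*E*c + 1) - 1.
Proof.
  intros H HE Hc.
  assert (E + - c <> 0) by lra.
  replace (s * (- - (2 * 1 * - s) * / ((E + - c) * (E + - c)))) with
    (-2 * (s*s) * / ((E + - c) * (E + - c))) by (field; lra).
  replace (1 + s * / (E + - c) * (s * / (E + - c) * 1)) with
    (1 + (s*s) * / ((E + - c) * (E + - c))) by (field; lra).
  replace (s*s) with (1 - c*c) by lra.
  assert (0 < E^2 - 2*E*c + 1) by nra.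
  field. replace ((E + - c) * (E + - c) + (1 - c * c)) with (E^2 - 2*E*c+1) by ring. lra.
Qed.

Lemma ef_derive a b : 0 < b -> is_derive (fun a => ef a b) a
  (b/(a^2+b^2) - (exp (2*b) ^2 - 1) / (exp (2*b)^2 - 2 * exp (2*b) * cos (2*a) + 1)).
Proof.
  intros Hb. unfold ef, Gf.
  assert (HE : 1 < exp (2*b)) by (pose proof (exp_ineq1 (2*b)); lra).
  assert (Hc := COS_bound (2*a)).
  assert (Hsc := sin2_cos2 (2*a)).
  auto_derive. lra.
  unfold Rsqr in Hsc.
  rewrite (Kaux (sin (2*a)) (cos (2*a)) (exp (2*b))) by lra.
  assert (0 < a^2 + b^2) by nra.
  assert (0 < exp (2*b)^2 - 2*exp (2*b)*cos (2*a) + 1) by nra. field. split; lra.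
Qed.

Lemma ef_lip al de be : 0 < al -> 0 < de -> al + de <= 2 -> 0 < be <= 1 ->
  Rabs (ef (al+de) be - ef al be) <= 27*be*de.
Proof.
  intros H1 H2 H3 H4.
  destruct (MVT_cor2 (fun a => ef a be)
    (fun a => be/(a^2+be^2) - (exp (2*be) ^2 - 1) / (exp (2*be)^2 - 2 * exp (2*be) * cos (2*a) + 1))
    al (al+de)) as [c [Hc1 Hc2]]. lra.
  { intros c Hc. apply is_derive_Reals. apply ef_derive. lra. }
  rewrite Hc1. rewrite Rabs_mult, (Rabs_pos_eq (al + de - al)) by lra.
  replace (al + de - al) with de by ring.
  apply Rmult_le_compat_r. lra. apply dE_bound; lra.
Qed.

Lemma S_finite m y : 0 < y -> PI*y/INR (2^S m) <= 1 ->
  Rabs (rsum (fun k => atan ((INR k + 3/4)/y) - atan ((INR k + 1/4)/y)) (2^m)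
        - (PI/4 - Gf (PI/4) (PI*y))) <= 27 * PI^2 * y / (4 * INR (2^S m)).
Proof.
  intros Hy Hbe.
  assert (HM := pow2_pos m).
  assert (HN : INR (2^S m) = 2 * INR (2^m)) by (rewrite Nat.pow_succ_r', mult_INR; reflexivity).
  rewrite (G_paired m y Hy).
  set (N := INR (2^S m)) in *. set (M := INR (2^m)) in *.
  set (be := PI * y / N) in *.
  assert (HPI := PI_RGT_0). assert (HPI4 : PI <= 4) by (pose proof PI_4; lra).
  assert (Hbe0 : 0 < be) by (unfold be; apply Rdiv_lt_0_compat; [nra|lra]).
  set (de := PI / (2*N)).
  assert (Hde : 0 < de) by (unfold de; apply Rdiv_lt_0_compat; lra).
  set (U := fun k => atan ((INR k + 3/4)/y) - atan ((INR k + 1/4)/y)).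
  set (g := fun k => Gf (PI * (INR k + 1/4) / N) be - Gf (PI * (INR k + 3/4) / N) be).
  set (dif := fun k => ef (PI * (INR k + 1/4) / N + de) be - ef (PI * (INR k + 1/4) / N) be).
  assert (Hpt : forall k, U k + g k = de + dif k).
  { intros k. unfold U, g, dif, ef.
    replace (PI * (INR k + 1/4) / N + de) with (PI * (INR k + 3/4) / N) by (unfold de; field; lra).
    replace (PI * (INR k + 1/4) / N / be) with ((INR k + 1/4)/y) by (unfold be; field; split; lra).
    replace (PI * (INR k + 3/4) / N / be) with ((INR k + 3/4)/y) by (unfold be; field; split; lra).
    unfold de. field. lra. }
  assert (Heq : rsum U (2^m) - (PI/4 - rsum g (2^m)) = rsum dif (2^m)).
  { assert (rsum (fun k => U k + g k) (2^m) = rsum (fun k => de + dif k) (2^m))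
      by (apply rsum_ext; intros; apply Hpt).
    rewrite !rsum_plus, rsum_const in H. fold M in H.
    assert (M * de = PI/4) by (unfold de; rewrite HN; field; lra). lra. }
  change (Rabs (rsum U (2^m) - (PI/4 - rsum g (2^m))) <= 27 * PI^2 * y / (4 * N)).
  rewrite Heq. unfold dif.
  eapply Rle_trans.
  - apply (rsum_abs_le _ (fun _ => 27*be*de)). intros k Hk.
    apply ef_lip; try lra.
    + apply Rdiv_lt_0_compat; [|lra]. apply Rmult_lt_0_compat. lra. pose proof (pos_INR k); lra.
    + replace (PI * (INR k + 1/4) / N + de) with (PI * (INR k + 3/4) / N) by (unfold de; field; lra).
      assert (INR k + 1 <= M). { fold M. rewrite <- S_INR. apply le_INR. lia. }
      apply Rmult_le_reg_r with N. lra. unfold Rdiv. rewrite Rmult_assoc, Rinv_l by lra.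
      rewrite HN. nra.
  - rewrite rsum_const. fold M. unfold be, de. rewrite HN. right. field. lra.
Qed.

Lemma rsum_sum_n f n : rsum f (S n) = sum_n f n.
Proof.
  induction n. simpl. rewrite sum_O. ring.
  rewrite sum_Sn. change (rsum f (S (S n))) with (rsum f (S n) + f (S n)). rewrite IHn. reflexivity.
Qed.

Lemma lim_inv_S' : is_lim_seq (fun n => / INR (S n)) 0.
Proof.
  replace (Finite 0) with (Rbar_inv p_infty) by reflexivity.
  apply is_lim_seq_inv. 2: discriminate.
  apply (is_lim_seq_incr_1 INR p_infty). apply is_lim_seq_INR.
Qed.

Lemma S_quarter_value y L : 0 < y ->
  is_series (fun k => atan ((INR k + 3/4)/y) - atan ((INR k + 1/4)/y)) L ->
  L = PI/4 - atan (exp (- (2*PI*y))).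
Proof.
  intros Hy HL.
  set (U := fun k => atan ((INR k + 3/4)/y) - atan ((INR k + 1/4)/y)) in *.
  set (T := PI/4 - Gf (PI/4) (PI*y)).
  set (C := 27 * PI^2 * y / 4).
  assert (HPI := PI_RGT_0).
  assert (HC : 0 < C) by (unfold C; apply Rdiv_lt_0_compat; [|lra]; apply Rmult_lt_0_compat; [|lra]; nra).
  assert (Hpow : forall m, INR (S m) <= INR (2^S m)).
  { intros m. apply le_INR. apply Nat.lt_le_incl, Nat.pow_gt_lin_r. lia. }
  assert (H1 : is_lim_seq (fun m => rsum U (2^S m)) L).
  { apply is_lim_seq_ext with (fun m => sum_n U (2^S m - 1)).
    { intros m. rewrite <- rsum_sum_n. f_equal. assert (0 < 2^S m)%nat by (apply Nat.neq_0_lt_0, Nat.pow_nonzero; lia). lia. }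
    apply (is_lim_seq_subseq (sum_n U) L (fun m => (2^S m - 1)%nat)).
    - intros P [N HN]. exists N. intros n Hn. apply HN.
      assert (S n < 2^S n)%nat by (apply Nat.pow_gt_lin_r; lia). lia.
    - exact HL. }
  assert (H2 : is_lim_seq (fun m => rsum U (2^S m)) T).
  { apply is_lim_seq_le_le_loc with (fun m => T - C / INR (S m)) (fun m => T + C / INR (S m)).
    - destruct (archimed (PI*y)) as [Ha _].
      exists (Z.to_nat (up (PI*y))). intros m Hm.
      assert (HS : PI * y <= INR (S m)).
      { assert (0 <= up (PI*y))%Z.
        { apply le_IZR. assert (0 < PI*y) by nra. lra. }
        rewrite INR_IZR_INZ in *. assert (IZR (Z.of_nat (Z.to_nat (up (PI*y)))) <= IZR (Z.of_nat (S m))).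
        { apply IZR_le. lia. } rewrite Z2Nat.id in H0 by lia. lra. }
      assert (HSm : 0 < INR (S m)) by (apply lt_0_INR; lia).
      assert (Hb : PI * y / INR (2^S (S m)) <= 1).
      { assert (INR (S (S m)) <= INR (2^S (S m))) by apply Hpow.
        rewrite S_INR with (n := S m) in H.
        apply Rmult_le_reg_r with (INR (2^S (S m))). lra. unfold Rdiv. rewrite Rmult_assoc, Rinv_l by lra. lra. }
      assert (HSF := S_finite (S m) y Hy Hb).
      fold U in HSF. fold T in HSF.
      replace (27 * PI^2 * y / (4 * INR (2^S (S m)))) with (C / INR (2^S (S m))) in HSF by (unfold C; pose proof (pow2_pos (S (S m))); field; lra).
      assert (C / INR (2^S (S m)) <= C / INR (S m)).
      { apply Rmult_le_compat_l. lra. apply Rinv_le_contravar. lra.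
        apply Rle_trans with (INR (S (S m))). rewrite S_INR with (n := S m). lra. apply Hpow. }
      (* rsum U (2^S m) vs the shifted statement : S_finite (S m) gives rsum U (2^S m) *)
      apply Rabs_le_between in HSF. lra.
    - replace (Finite T) with (Rbar_minus T (Rbar_mult C 0)) by (simpl; f_equal; ring).
      apply is_lim_seq_minus'. apply is_lim_seq_const. apply (is_lim_seq_scal_l _ C 0). apply lim_inv_S'.
    - replace (Finite T) with (Rbar_plus T (Rbar_mult C 0)) by (simpl; f_equal; ring).
      apply is_lim_seq_plus'. apply is_lim_seq_const. apply (is_lim_seq_scal_l _ C 0). apply lim_inv_S'. }
  apply is_lim_seq_unique in H1. apply is_lim_seq_unique in H2.
  rewrite H1 in H2. injection H2 as H2. rewrite H2. unfold T, Gf.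
  replace (2 * (PI/4)) with (PI/2) by field. rewrite sin_PI2, cos_PI2.
  rewrite exp_Ropp. f_equal. f_equal. f_equal. unfold Rdiv. rewrite Rminus_0_r, Rmult_1_l. f_equal. f_equal. ring.
Qed.

Lemma Mtest (g : R -> nat -> R) (M : nat -> R) (D : R -> Prop) :
  (forall n x, D x -> Rabs (g x n) <= M n) -> ex_series M ->
  CVU_dom (fun n x => sum_n (g x) n) D.
Proof.
  intros Hg HM. apply CVU_dom_cauchy. intros eps.
  destruct (Cauchy_ex_series M HM eps) as [N HN].
  exists N. intros n m x Hx Hn Hm.
  assert (Hgen : forall n m, (N <= n)%nat -> (N <= m)%nat -> (n < m)%nat ->
     Rabs (sum_n (g x) n - sum_n (g x) m) < eps).
  { clear n m Hn Hm. intros n m Hn Hm Hnm.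
    rewrite Rabs_minus_sym.
    pose proof (sum_n_m_sum_n (g x) n m ltac:(lia)) as E.
    change (minus (sum_n (g x) m) (sum_n (g x) n)) with (sum_n (g x) m - sum_n (g x) n) in E.
    rewrite <- E.
    eapply Rle_lt_trans. apply (norm_sum_n_m (g x) (S n) m).
    eapply Rle_lt_trans. apply (sum_n_m_le _ (fun k => M k)). intros k. apply Hg. exact Hx.
    specialize (HN (S n) m ltac:(lia) Hm).
    eapply Rle_lt_trans. 2: exact HN. unfold norm; simpl. unfold abs; simpl. apply Rle_abs. }
  destruct (lt_eq_lt_dec n m) as [[H|H]|H].
  - apply Hgen; auto.
  - subst. rewrite Rminus_eq_0, Rabs_R0. apply cond_pos.
  - rewrite Rabs_minus_sym. apply Hgen; auto.
Qed.

Definition dW (y s : R) (n : nat) : R :=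
  - (1/(2*y)) * (/ (1 + ((INR (S n) + (3/4 - s/2))/y)^2) - / (1 + ((INR (S n) + (1/4 - s/2))/y)^2)).

Lemma W_derive y s n : 0 < y -> is_derive (fun s => W y s n) s (dW y s n).
Proof.
  intros Hy. unfold W, dW. generalize (INR (S n)). intros k. auto_derive. auto. field.
  assert (0 < (8*y)^2) by (apply pow_lt; lra).
  split. lra. split; apply Rgt_not_eq.
  - assert (0 <= (k * 8 + (2 - s * 4)) ^ 2) by apply pow2_ge_0. lra.
  - assert (0 <= (k * 8 + (6 - s * 4)) ^ 2) by apply pow2_ge_0. lra.
Qed.

Lemma inv_sq_bound y B k : 0 < y -> 1 <= k -> k/(2*y) <= B ->
  (1/(2*y)) * / (1 + B^2) <= 2*y*/(k*k).
Proof.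
  intros Hy Hk HB.
  assert (HB0 : 0 < B) by (assert (0 < k/(2*y)) by (apply Rdiv_lt_0_compat; lra); lra).
  assert (H1 : (k/(2*y))^2 <= B^2) by (apply pow_incr; split; [apply Rlt_le, Rdiv_lt_0_compat; lra| exact HB]).
  assert (H2 : 0 < (k/(2*y))^2) by (apply pow_lt, Rdiv_lt_0_compat; lra).
  apply Rle_trans with ((1/(2*y)) * / ((k/(2*y))^2)).
  - apply Rmult_le_compat_l. apply Rlt_le, Rdiv_lt_0_compat; lra.
    apply Rinv_le_contravar. exact H2. lra.
  - right. field. lra.
Qed.

Lemma atan_diff_bound A B : 0 <= B <= A -> 0 <= atan A - atan B <= (A - B) * / (1 + B^2).
Proof.
  intros H. destruct (Req_dec A B) as [->|HAB].
  { replace (atan B - atan B) with 0 by ring. replace ((B - B) * / (1 + B^2)) with 0 by ring. lra. }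
  destruct (MVT_cor2 atan (fun u => / (1 + u^2)) B A) as [c [Hc1 Hc2]]. lra.
  { intros; apply derivable_pt_lim_atan. }
  rewrite Hc1.
  assert (0 < / (1 + c^2)) by (apply Rinv_0_lt_compat; nra).
  assert (/ (1 + c^2) <= / (1 + B^2)).
  { apply Rinv_le_contravar. nra. apply Rplus_le_compat_l. apply pow_incr. lra. }
  split. nra. rewrite Rmult_comm. apply Rmult_le_compat_l; lra.
Qed.

Lemma Wbounds y s n : 0 < y -> -1 < s < 3/2 ->
  (0 <= W y s n <= 2*y*/(INR (S n) * INR (S n))) /\
  (0 <= dW y s n <= 2*y*/(INR (S n) * INR (S n))).
Proof.
  intros Hy Hs. unfold W, dW.
  assert (Hk : 1 <= INR (S n)) by (apply (le_INR 1); lia).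
  set (k := INR (S n)) in *.
  set (B := (k + (1/4 - s/2))/y). set (A := (k + (3/4 - s/2))/y).
  assert (HB : k/(2*y) <= B).
  { unfold B. apply Rmult_le_reg_r with (2*y). lra. field_simplify; lra. }
  assert (HB0 : 0 <= B) by (assert (0 < k/(2*y)) by (apply Rdiv_lt_0_compat; lra); lra).
  assert (HAB : A - B = 1/(2*y)) by (unfold A, B; field; lra).
  pose proof (inv_sq_bound y B k Hy Hk HB) as Hq.
  assert (Hy2 : 0 < 1/(2*y)) by (apply Rdiv_lt_0_compat; lra).
  split.
  - destruct (atan_diff_bound A B) as [H1 H2]. lra. split. lra.
    rewrite HAB in H2. lra.
  - assert (/ (1 + A^2) <= / (1 + B^2)).
    { apply Rinv_le_contravar. nra. apply Rplus_le_compat_l. apply pow_incr. lra. }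
    assert (0 < / (1 + A^2)) by (apply Rinv_0_lt_compat; nra).
    assert (0 < 1/(2*y)) by (apply Rdiv_lt_0_compat; lra).
    split.
    + assert (0 <= 1/(2*y) * (/ (1 + B^2) - / (1 + A^2))) by (apply Rmult_le_pos; lra).
      lra.
    + assert (1/(2*y) * (/ (1 + B^2) - / (1 + A^2)) <= 1/(2*y) * / (1 + B^2)).
      { apply Rmult_le_compat_l; lra. }
      lra.
Qed.


Lemma dW_ex_derive y s n : 0 < y -> ex_derive (fun s => dW y s n) s.
Proof.
  intros Hy. unfold dW. generalize (INR (S n)). intros k. auto_derive.
  repeat split; try lra.
  all: apply Rgt_not_eq; match goal with |- 1 + ?x * (?x * 1) > 0 => replace (x * (x*1)) with (x*x) by ring; pose proof (Rle_0_sqr x); unfold Rsqr in *; lra end.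
Qed.


Lemma sum_W_derive y n s : 0 < y ->
  is_derive (fun s => sum_n (W y s) n) s (sum_n (dW y s) n).
Proof.
  intros Hy. induction n.
  - apply is_derive_ext with (fun s => W y s 0%nat).
    { intros t. rewrite sum_O. reflexivity. }
    rewrite sum_O. apply W_derive; exact Hy.
  - apply is_derive_ext with (fun s => sum_n (W y s) n + W y s (S n)).
    { intros t. rewrite sum_Sn. reflexivity. }
    rewrite sum_Sn. apply (is_derive_plus (fun s => sum_n (W y s) n) (fun s => W y s (S n))).
    exact IHn. apply W_derive; exact Hy.
Qed.

Lemma sum_dW_ex_derive y n s : 0 < y -> ex_derive (fun s => sum_n (dW y s) n) s.
Proof.
  intros Hy. induction n.
  - apply ex_derive_ext with (fun s => dW y s 0%nat).
    { intros t. rewrite sum_O. reflexivity. }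
    apply dW_ex_derive; exact Hy.
  - apply ex_derive_ext with (fun s => sum_n (dW y s) n + dW y s (S n)).
    { intros t. rewrite sum_Sn. reflexivity. }
    apply (ex_derive_plus (fun s => sum_n (dW y s) n) (fun s => dW y s (S n))).
    exact IHn. apply dW_ex_derive; exact Hy.
Qed.

Lemma F_derive y s : 0 < y -> -1 < s < 3/2 ->
  is_derive (fun s => Series (W y s)) s (Series (dW y s)).
Proof.
  intros Hy Hs.
  set (fn := fun n s => sum_n (W y s) n).
  assert (HD : forall n, Derive (fn n) = fun x => sum_n (dW y x) n).
  { intros n. apply functional_extensionality. intros x.
    apply is_derive_unique. apply sum_W_derive. exact Hy. }
  assert (Hk2 : forall n, 0 <= 2*y*/(INR (S n) * INR (S n))).
  { intros n. assert (0 < INR (S n)) by (apply lt_0_INR; lia).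
    apply Rmult_le_pos. lra. apply Rlt_le, Rinv_0_lt_compat. nra. }
  assert (HM : ex_series (fun n => 2*y*/(INR (S n) * INR (S n)))).
  { exact (@ex_series_scal_l R_AbsRing R_NormedModule _ _ ex_series_inv_sq). }
  pose proof (CVU_Derive fn (fun s => -1 < s /\ s < 3/2)) as H.
  unfold Series.
  assert (E : (fun n => Derive (fn n) s) = sum_n (dW y s)).
  { apply functional_extensionality; intros n. rewrite HD. reflexivity. }
  rewrite <- E. apply H.
  - apply open_and; [apply open_gt | apply open_lt].
  - intros a b x [Ha1 Ha2] [Hb1 Hb2] [Hx1 Hx2]; split; lra.
  - apply (Mtest (W y) (fun n => 2*y*/(INR (S n) * INR (S n)))); [|exact HM].
    intros n x Hx. destruct (Wbounds y x n Hy Hx) as [[H1 H2] _].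
    rewrite Rabs_pos_eq; lra.
  - intros n x _. eexists. apply sum_W_derive. exact Hy.
  - intros n x _. rewrite HD. apply continuity_pt_filterlim.
    exact (@ex_derive_continuous R_AbsRing R_NormedModule (fun x => sum_n (dW y x) n) x (sum_dW_ex_derive y n x Hy)).
  - assert (E2 : (fun n x => Derive (fn n) x) = (fun n x => sum_n (dW y x) n)).
    { apply functional_extensionality; intros n. rewrite HD. reflexivity. }
    rewrite E2.
    apply (Mtest (dW y) (fun n => 2*y*/(INR (S n) * INR (S n)))); [|exact HM].
    intros n x Hx. destruct (Wbounds y x n Hy Hx) as [_ [H1 H2]].
    rewrite Rabs_pos_eq; lra.
  - lra.
Qed.

Definition d0 (y s : R) : R :=
  - (1/(2*y)) * (/ (1 + ((3/4 - s/2)/y)^2) - / (1 + ((1/4 - s/2)/y)^2)).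

Lemma fsig_derive t s : 0 < t -> -1 < s < 3/2 ->
  is_derive (fun s => fsig s t) s (d0 (t/2) s + Series (dW (t/2) s)).
Proof.
  intros Ht Hs.
  apply is_derive_ext_loc with
    (fun u => (- (PI/4) + (atan ((3/4 - u/2)/(t/2)) - atan ((1/4 - u/2)/(t/2)))) + Series (W (t/2) u)).
  - pose proof (open_lt (3/2) s ltac:(lra)) as Hl.
    eapply filter_imp. 2: exact Hl. intros u Hu. simpl. rewrite fsig_repr by lra. reflexivity.
  - apply (is_derive_plus (fun u => - (PI/4) + (atan ((3/4 - u/2)/(t/2)) - atan ((1/4 - u/2)/(t/2))))
                          (fun u => Series (W (t/2) u))).
    + unfold d0. auto_derive.
      * repeat split; try lra.
      * field. assert (0 < (t/2)^2) by (apply pow_lt; lra).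
        split. lra. split; apply Rgt_not_eq; apply Rlt_gt; apply Rplus_lt_le_0_compat; first [apply pow_lt; lra | apply pow2_ge_0].
    + apply F_derive; lra.
Qed.

Lemma sum_n_nonneg (a : nat -> R) n : (forall k, 0 <= a k) -> 0 <= sum_n a n.
Proof.
  intros H. induction n. rewrite sum_O. apply H.
  rewrite sum_Sn. unfold plus; simpl. specialize (H (S n)). lra.
Qed.

Lemma Series_nonneg (a : nat -> R) : (forall n, 0 <= a n) -> ex_series a -> 0 <= Series a.
Proof.
  intros H Hex. pose proof (Series_correct a Hex) as Hs.
  assert (Rbar_le 0 (Series a)).
  { apply (is_lim_seq_le (fun _ => 0) (sum_n a)).
    intros n. apply sum_n_nonneg. exact H.
    apply is_lim_seq_const. exact Hs. }
  simpl in H0. exact H0.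
Qed.

Lemma fsig_Derive_pos t s : 0 < t -> 0 < s < 1 -> 0 < d0 (t/2) s + Series (dW (t/2) s).
Proof.
  intros Ht Hs.
  assert (Hser : 0 <= Series (dW (t/2) s)).
  { apply Series_nonneg.
    - intros n. destruct (Wbounds (t/2) s n ltac:(lra) ltac:(lra)) as [_ [H1 _]]. exact H1.
    - apply (@ex_series_le R_AbsRing R_CompleteNormedModule _ (fun n => 2*(t/2)*/(INR (S n) * INR (S n)))).
      + intros n. destruct (Wbounds (t/2) s n ltac:(lra) ltac:(lra)) as [_ [H1 H2]].
        change (Rabs (dW (t/2) s n) <= 2*(t/2)*/(INR (S n) * INR (S n))). rewrite Rabs_pos_eq; lra.
      + exact (@ex_series_scal_l R_AbsRing R_NormedModule _ _ ex_series_inv_sq). }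
  assert (Hd : 0 < d0 (t/2) s).
  { unfold d0. set (A := (3/4 - s/2)/(t/2)). set (B := (1/4 - s/2)/(t/2)).
    assert (HAB : B^2 < A^2).
    { assert (A^2 - B^2 = (1 - s)/2 * /((t/2)^2)) by (unfold A, B; field; lra).
      assert (0 < (1-s)/2 * /((t/2)^2)) by (apply Rmult_lt_0_compat; [lra| apply Rinv_0_lt_compat, pow_lt; lra]).
      lra. }
    assert (/ (1 + A^2) < / (1 + B^2)).
    { apply Rinv_lt_contravar. assert (0 <= B^2) by apply pow2_ge_0. nra. lra. }
    assert (0 < 1/(2*(t/2))) by (apply Rdiv_lt_0_compat; lra).
    nra. }
  lra.
Qed.

Lemma ex_series_W y s : 0 < y -> -1 < s < 3/2 -> ex_series (W y s).
Proof.
  intros Hy Hs.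
  apply (@ex_series_le R_AbsRing R_CompleteNormedModule _ (fun n => 2*y*/(INR (S n) * INR (S n)))).
  + intros n. destruct (Wbounds y s n Hy Hs) as [[H1 H2] _].
    change (Rabs (W y s n) <= 2*y*/(INR (S n) * INR (S n))). rewrite Rabs_pos_eq; lra.
  + exact (@ex_series_scal_l R_AbsRing R_NormedModule _ _ ex_series_inv_sq).
Qed.

Lemma is_series_cons (a : nat -> R) (l : R) : is_series (fun k => a (S k)) l -> is_series a (a 0%nat + l).
Proof.
  intros H. apply is_series_decr_1.
  match goal with |- is_series _ ?x => replace x with l end. exact H.
  unfold plus, opp; simpl. ring.
Qed.

Lemma W0_series y : 0 < y ->
  Series (W y 0) = PI/4 - atan (exp (- (2*PI*y))) - (atan ((3/4)/y) - atan ((1/4)/y)).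
Proof.
  intros Hy.
  set (U := fun k => atan ((INR k + 3/4)/y) - atan ((INR k + 1/4)/y)).
  assert (HU : is_series U (U 0%nat + Series (W y 0))).
  { apply is_series_cons.
    apply (is_series_ext (W y 0)).
    { intros n. unfold W, U. f_equal; f_equal; f_equal; field. }
    apply Series_correct. apply ex_series_W; lra. }
  pose proof (S_quarter_value y _ Hy HU) as E.
  unfold U in E. simpl INR in E. rewrite !Rplus_0_l in E. lra.
Qed.

Lemma fsig0 t : 0 < t -> fsig 0 t = - atan (exp (- (PI * t))).
Proof.
  intros Ht. rewrite fsig_repr by lra.
  rewrite W0_series by lra.
  replace (3/4 - 0/2) with (3/4) by field. replace (1/4 - 0/2) with (1/4) by field.
  replace (2*PI*(t/2)) with (PI*t) by field. ring.
Qed.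

Lemma atan_lim_34 y : 0 < y -> is_lim_seq (fun n => atan ((INR n + 3/4)/y)) (PI/2).
Proof.
  intros Hy.
  apply is_lim_seq_le_le with (fun n => PI/2 - (4*y/3) * / INR (S n)) (fun _ => PI/2).
  - intros n. assert (Hn := pos_INR n).
    assert (Hx : 0 < (INR n + 3/4)/y) by (apply Rdiv_lt_0_compat; lra).
    rewrite <- (Rinv_inv ((INR n + 3/4)/y)). rewrite atan_inv by (apply Rinv_0_lt_compat; lra).
    assert (Hi : 0 <= / ((INR n + 3/4)/y)) by (apply Rlt_le, Rinv_0_lt_compat; lra).
    destruct (atan_bounds _ Hi) as [A1 A2].
    pose proof (atan_nonneg _ Hi).
    split; [|lra].
    assert (/ ((INR n + 3/4)/y) <= 4*y/3 * / INR (S n)).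
    { rewrite S_INR. replace (/ ((INR n + 3/4)/y)) with (y / (INR n + 3/4)) by (field; lra).
      apply Rmult_le_reg_r with ((INR n + 3/4)*(INR n + 1)). nra.
      field_simplify; try lra. nra. }
    lra.
  - replace (Finite (PI/2)) with (Rbar_minus (PI/2) (Rbar_mult (4*y/3) 0)) by (simpl; f_equal; ring).
    apply is_lim_seq_minus'. apply is_lim_seq_const. apply (is_lim_seq_scal_l _ (4*y/3) 0). apply lim_inv_S'.
  - apply is_lim_seq_const.
Qed.

Lemma W01_series y : 0 < y -> Series (W y 0) + Series (W y 1) = PI/2 - atan ((3/4)/y).
Proof.
  intros Hy.
  rewrite <- Series_plus by (apply ex_series_W; lra).
  apply is_series_unique.
  set (b := fun n => - atan ((INR n + 3/4)/y)).
  apply (is_series_ext (fun n => b n - b (S n))).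
  { intros n. change (@eq R (b n - b (S n)) (W y 0 n + W y 1 n)). unfold b, W. rewrite S_INR.
    replace (INR n + 1 + (1/4 - 1/2)) with (INR n + 3/4) by field.
    replace (INR n + 1 + (3/4 - 0/2)) with (INR n + 1 + 3/4) by field.
    replace (INR n + 1 + (3/4 - 1/2)) with (INR n + 1 + (1/4 - 0/2)) by field.
    ring. }
  replace (PI/2 - atan ((3/4)/y)) with (b 0%nat - (- (PI/2))).
  2:{ unfold b. simpl INR. rewrite Rplus_0_l. ring. }
  apply is_series_telescope.
  assert (Hl := proj1 (is_lim_seq_opp _ _) (atan_lim_34 y Hy)). simpl in Hl. exact Hl.
Qed.

Lemma fsig1 t : 0 < t -> fsig 1 t = atan ((1/4)/(t/2)) + atan (exp (- (PI * t))).
Proof.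
  intros Ht. rewrite fsig_repr by lra.
  pose proof (W01_series (t/2) ltac:(lra)) as E1.
  pose proof (W0_series (t/2) ltac:(lra)) as E0.
  replace (3/4 - 1/2) with (1/4) by field. replace (1/4 - 1/2) with (- (1/4)) by field.
  replace (- (1/4) / (t/2)) with (- ((1/4)/(t/2))) by (field; lra). rewrite atan_opp.
  replace (2*PI*(t/2)) with (PI*t) in E0 by field.
  lra.
Qed.

Theorem lemma5p1 :
  (forall t : R, 0 < t ->
     (- (PI / 2) < fsig 0 t < 0) /\ (0 < fsig 1 t < PI)) /\
  (forall sigma t : R, 0 < sigma < 1 -> 0 < t ->
     ex_derive (fun s => fsig s t) sigma /\ 0 < Derive (fun s => fsig s t) sigma) /\
  (forall t : R, 0 < t ->
     (exists! sigma : R, 0 < sigma < 1 /\ fsig sigma t = 0) /\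
     (forall (n : Z) (sigma : R), n <> 0%Z -> 0 < sigma < 1 ->
        fsig sigma t <> 2 * PI * IZR n)).
Proof.
  assert (Hpi := PI_RGT_0).
  assert (Hq : forall t, 0 < t -> 0 < atan (exp (- (PI*t))) < PI/4).
  { intros t Ht. assert (0 < exp (- (PI*t))) by apply exp_pos.
    assert (exp (- (PI*t)) < 1).
    { rewrite <- exp_0. apply exp_increasing. nra. }
    split.
    - pose proof (atan_increasing 0 _ H). rewrite atan_0 in H1. exact H1.
    - rewrite <- atan_1. apply atan_increasing. exact H0. }
  assert (Ha1 : forall t, 0 < t -> 0 < atan ((1/4)/(t/2)) < PI/2).
  { intros t Ht. split.
    - assert (0 < (1/4)/(t/2)) by (apply Rdiv_lt_0_compat; lra).
      pose proof (atan_increasing 0 _ H). rewrite atan_0 in H0. exact H0.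
    - pose proof (atan_bound ((1/4)/(t/2))). lra. }
  assert (P1 : forall t : R, 0 < t ->
     (- (PI / 2) < fsig 0 t < 0) /\ (0 < fsig 1 t < PI)).
  { intros t Ht. rewrite fsig0, fsig1 by exact Ht.
    pose proof (Hq t Ht). pose proof (Ha1 t Ht). split; split; lra. }
  assert (P2 : forall sigma t : R, 0 < sigma < 1 -> 0 < t ->
     ex_derive (fun s => fsig s t) sigma /\ 0 < Derive (fun s => fsig s t) sigma).
  { intros s t Hs Ht. pose proof (fsig_derive t s Ht ltac:(lra)) as H.
    split. eexists; exact H.
    assert (E : Derive (fun s0 => fsig s0 t) s = d0 (t/2) s + Series (dW (t/2) s))
      by (apply is_derive_unique; exact H).
    rewrite E. apply fsig_Derive_pos; assumption. }
  split; [exact P1|]. split; [exact P2|].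
  intros t Ht.
  set (g := fun s => fsig s t).
  set (D := fun s => d0 (t/2) s + Series (dW (t/2) s)).
  assert (Hder : forall s, -1 < s < 3/2 -> is_derive g s (D s)).
  { intros s Hs. apply fsig_derive; assumption. }
  assert (Hincr : forall a b, 0 <= a -> a < b -> b <= 1 -> g a < g b).
  { intros a b Ha Hab Hb.
    destruct (MVT_cor2 g D a b Hab) as [c [Hc1 Hc2]].
    { intros c Hc. apply is_derive_Reals. apply Hder. lra. }
    assert (0 < D c) by (apply fsig_Derive_pos; lra).
    assert (0 < D c * (b - a)) by (apply Rmult_lt_0_compat; lra). lra. }
  assert (Hcont : forall s, 0 <= s <= 1 -> continuity_pt g s).
  { intros s Hs. apply derivable_continuous_pt. exists (D s).
    apply is_derive_Reals. apply Hder. lra. }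
  destruct (P1 t Ht) as [[H01 H02] [H11 H12]].
  fold (g 0) in H01, H02. fold (g 1) in H11, H12.
  split.
  - destruct (Ranalysis5.IVT_interv g 0 1 Hcont ltac:(lra) H02 H11) as [z [Hz Hgz]].
    assert (z <> 0) by (intros ->; lra). assert (z <> 1) by (intros ->; lra).
    exists z. split. split. lra. exact Hgz.
    intros z' [Hz' Hgz'].
    destruct (Rtotal_order z z') as [Hlt|[Heq|Hgt]].
    + pose proof (Hincr z z' ltac:(lra) Hlt ltac:(lra)). unfold g in *. lra.
    + exact Heq.
    + pose proof (Hincr z' z ltac:(lra) Hgt ltac:(lra)). unfold g in *. lra.
  - intros n s Hn Hs Heq.
    pose proof (Hincr 0 s ltac:(lra) ltac:(lra) ltac:(lra)).
    pose proof (Hincr s 1 ltac:(lra) ltac:(lra) ltac:(lra)).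
    unfold g in *. rewrite Heq in *.
    destruct (Z.lt_trichotomy n 0) as [Hlt|[Heq0|Hgt]].
    + assert (IZR n <= -1) by (apply IZR_le; lia). nra.
    + contradiction.
    + assert (1 <= IZR n) by (apply IZR_le; lia). nra.
Qed.
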